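(* Consider the $K$-user shared-link broadcast (coded caching) problem with $\Lambda\le K$ shared helper caches of normalized size $\gamma=M/N$, with $N\ge K$ files, under uncoded cache placement, as described in the context. Let $\boldsymbol{\mathcal{L}}=(\mathcal{L}_1,\dots,\mathcal{L}_\Lambda)$ be any user-to-cache association profile (non-negative integers, $\mathcal{L}_1\ge\mathcal{L}_2\ge\dots\ge\mathcal{L}_\Lambda$, $\sum_{\lambda}\mathcal{L}_\lambda=K$). For $i\in\{0,1,\dots,\Lambda\}$ let $$f(i)=\frac{\sum_{r=1}^{\Lambda-i}\mathcal{L}_r\binom{\Lambda-r}{i}}{\binom{\Lambda}{i}},$$ and let $\mathrm{Conv}(f)$ denote the lower convex envelope of the points $\{(i,f(i)) : i\in\{0,1,\dots,\Lambda\}\}$. Then for every $\gamma\in\{\frac{1}{\Lambda},\frac{2}{\Lambda},\dots,1\}$, the optimal worst-case delivery time satisfies $$T^*(\boldsymbol{\mathcal{L}})=\mathrm{Conv}(f)\big|_{i=\Lambda\gamma}.$$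
   Context: Setting: a server has a library of $N$ files $W^1,\dots,W^N$, each of size one unit. There are $K$ users and $\Lambda\le K$ helper caches, each able to store $M\le N$ units; $\gamma=M/N$, and $N\ge K$. Communication has three phases. (a) Cache placement: each cache $\lambda\in[\Lambda]$ stores content $\mathcal{Z}_\lambda$ of size at most $M$ consisting of uncoded pieces (subsets of bits) of the library files (uncoded cache placement); placement is done without knowledge of the later user-to-cache association or of the demands. (b) User-to-cache association: each user is assigned to exactly one cache; this is a partition $\mathcal{U}=\{\mathcal{U}_1,\dots,\mathcal{U}_\Lambda\}$ of $[K]$, where $\mathcal{U}_\lambda$ is the set of users assigned to cache $\lambda$, each of whom has free access to $\mathcal{Z}_\lambda$. Its profile $\boldsymbol{\mathcal{L}}$ is the vector of cardinalities $|\mathcal{U}_\lambda|$ sorted in non-increasing order; $\mathcal{U}_{\boldsymbol{\mathcal{L}}}$ denotes the class of all associations with profile $\boldsymbol{\mathcal{L}}$. (c) Delivery: each user $k$ requests a file $W^{d_k}$, giving a demand vector $\boldsymbol{d}\in[N]^K$; knowing $\boldsymbol{d}$ and $\mathcal{U}$, the server transmits over an error-free shared broadcast link so that every user can decode its requested file from the transmission and the content of its assigned cache. A caching-and-delivery scheme $\chi$ specifies placement and delivery; $T(\mathcal{U},\boldsymbol{d},\chi)$ is the delivery duration, normalized so that one time unit is the time to send one file over the link. The optimal worst-case delivery time of a profile is $T^*(\boldsymbol{\mathcal{L}})=\min_{\chi}\max_{\mathcal{U}\in\mathcal{U}_{\boldsymbol{\mathcal{L}}},\,\boldsymbol{d}\in[N]^K}T(\mathcal{U},\boldsymbol{d},\chi)$,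 the minimum being over schemes with uncoded cache placement. Binomial coefficients $\binom{a}{b}$ with $b>a$ are zero. *)

(* Defs.v *)
From mathcomp Require Import all_boot all_order all_algebra.
Set Implicit Arguments. Unset Strict Implicit. Unset Printing Implicit Defensive.
Import Order.TTheory GRing.Theory Num.Theory.
Local Open Scope ring_scope.

(* A library of N files, each consisting of B bits (B bits = one unit). *)
Definition library (N B : nat) := {ffun 'I_N -> {ffun 'I_B -> bool}}.

(* Content of a cache storing (uncoded) the set Z of bits (file, position):
   the stored bits are revealed, all other bits are masked to false. *)
Definition cache_view (N B : nat) (Z : {set 'I_N * 'I_B}) (W : library N B)
  : library N B :=
  [ffun n => [ffun b => ((n, b) \in Z) && W n b]].

Definition assoc (K Lam : nat) := {ffun 'I_K -> 'I_Lam}.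
Definition demand (K N : nat) := {ffun 'I_K -> 'I_N}.

Definition has_profile (K Lam : nat) (L : 'I_Lam -> nat) (a : assoc K Lam) : bool :=
  sort geq [seq #|[set k | a k == l]| | l <- enum 'I_Lam]
  == [seq L l | l <- enum 'I_Lam].

(* A caching-and-delivery scheme with file size B bits: uncoded placement
   (cache lam stores the bits in placement lam, independent of association
   and demands), and for every association a and demand d a transmission of
   msglen a d bits computed from the library. *)
Record scheme (K Lam N B : nat) := Scheme {
  placement : 'I_Lam -> {set 'I_N * 'I_B};
  msglen : assoc K Lam -> demand K N -> nat;
  encode : assoc K Lam -> demand K N -> library N B -> seq bool }.

Definition valid_scheme (K Lam N B : nat) (M : rat) (chi : scheme K Lam N B) : Prop :=
  [/\ forall l, (#|placement chi l|)%:R <= M * B%:R,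
      forall a d W, size (encode chi a d W) = msglen chi a d &
      forall a d (k : 'I_K),
        exists dec : seq bool -> library N B -> {ffun 'I_B -> bool},
          forall W, dec (encode chi a d W) (cache_view (placement chi (a k)) W)
                    = W (d k)].

Definition worst_time (K Lam N B : nat) (L : 'I_Lam -> nat)
  (chi : scheme K Lam N B) : rat :=
  (\max_(a : assoc K Lam | has_profile L a)
     \max_(d : demand K N) msglen chi a d)%N%:R / B%:R.

(* f(i) = (sum_{r=1}^{Lam-i} L_r C(Lam-r, i)) / C(Lam, i), L 0-indexed *)
Definition fprof (Lam : nat) (L : 'I_Lam -> nat) (i : nat) : rat :=
  (\sum_(r < Lam | (r < Lam - i)%N) L r * 'C(Lam - r.+1, i))%N%:R / ('C(Lam, i))%:R.

(* v is the value at x of the lower convex envelope of the points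
   (i, g i), i = 0..n : the minimum over convex combinations of the points
   with abscissa x of the corresponding ordinate. *)
Definition conv_comb (n : nat) (w : 'I_n.+1 -> rat) (x : rat) : Prop :=
  (forall i, 0 <= w i) /\ \sum_(i < n.+1) w i = 1 /\
  \sum_(i < n.+1) w i * (i%:R) = x.

Definition is_lower_conv_env (n : nat) (g : nat -> rat) (x v : rat) : Prop :=
  (exists w, conv_comb w x /\ \sum_(i < n.+1) w i * g i = v) /\
  (forall w, conv_comb w x -> v <= \sum_(i < n.+1) w i * g i).

(* Main.v *)
Require Import Defs.
From mathcomp Require Import all_boot all_order all_algebra all_fingroup.
From mathcomp Require Import zify ring lra.
Set Implicit Arguments. Unset Strict Implicit. Unset Printing Implicit Defensive.
Import Order.TTheory GRing.Theory Num.Theory.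
Section NatPart.
Local Open Scope nat_scope.

Lemma binA n q i : 'C(n - q, i) * 'C(n, q) = 'C(n, i) * 'C(n - i, q).
Proof.
case: (leqP i n) => H0; last first.
  by rewrite (@bin_small (n - q) i) ?(@bin_small n i) ?mul0n //; lia.
case: (leqP q n) => H1; last first.
  by rewrite (@bin_small n q) ?(@bin_small (n - i) q) ?muln0 ?mul0n //; lia.
case: (leqP q (n - i)) => H; last first.
  by rewrite (@bin_small (n - q) i) ?(@bin_small (n - i) q) ?muln0 ?mul0n //; lia.
have Hq : (q <= n)%N by lia.
have Hi : (i <= n)%N by lia.
have e1 := bin_fact Hq.
have e2 : (i <= n - q)%N by lia.
have e3 := bin_fact e2.
have e4 := bin_fact Hi.
have e5 : (q <= n - i)%N by lia.
have e6 := bin_fact e5.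
have E : (n - q - i = n - i - q)%N by lia.
apply/eqP; rewrite -(@eqn_pmul2r (i`! * q`! * (n - q - i)`!)); last first.
  by rewrite !muln_gt0 !fact_gt0.
apply/eqP.
transitivity n`!.
  rewrite -e1 -e3. ring.
rewrite -e4 -e6 E. ring.
Qed.

Lemma bin_up b p e : 'C(b, p.+1) + e * 'C(b, p) <= 'C(b + e, p.+1).
Proof.
elim: e => [|e IH]; first by rewrite mul0n addn0 addn0.
rewrite addnS binS mulSn.
have := leq_bin2l p (leq_addr e b).
lia.
Qed.

Lemma bin_down a p e : 'C(a + e, p.+1) <= 'C(a, p.+1) + e * 'C(a + e, p).
Proof.
elim: e => [|e IH]; first by rewrite mul0n addn0 addn0.
rewrite addnS binS mulSn.
have := leq_bin2l p (leqnSn (a + e)).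
have := leq_mul (leqnn e) (leq_bin2l p (leqnSn (a + e))).
lia.
Qed.
End NatPart.
Section RatPart.
Local Open Scope ring_scope.

Lemma bin_conv_rat (a b p : nat) :
  ('C(b,p.+1)%:R + (a%:R - b%:R) * 'C(b,p)%:R <= 'C(a,p.+1)%:R :> rat).
Proof.
case: (leqP b a) => H.
  have -> : a = (b + (a - b))%N by lia.
  have := bin_up b p (a - b); rewrite -(ler_nat rat) natrD natrM => H1.
  by rewrite natrD addrAC subrr add0r.
have -> : b = (a + (b - a))%N by lia.
have := bin_down a p (b - a); rewrite -(ler_nat rat) natrD natrM => H1.
rewrite natrD opprD addrA subrr add0r mulNr. lra.
Qed.

Lemma fprof_nocond Lam (L : 'I_Lam -> nat) i :
  fprof L i = (\sum_(r < Lam) L r * 'C(Lam - r.+1, i))%N%:R / ('C(Lam, i))%:R.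
Proof.
rewrite /fprof; congr (_%:R / _); rewrite [RHS](bigID (fun r : 'I_Lam => (r < Lam - i)%N)) /=.
rewrite [X in _ = (_ + X)%N]big1 ?addn0 // => r Hr.
have Hr2 := ltn_ord r; rewrite bin_small ?muln0 //. move: Hr => /negP Hr. lia.
Qed.

Lemma fprofE Lam (L : 'I_Lam -> nat) i : (i <= Lam)%N ->
  fprof L i = \sum_(r < Lam) (L r)%:R * 'C(Lam - i, r.+1)%:R / 'C(Lam, r.+1)%:R.
Proof.
move=> Hi; rewrite fprof_nocond natr_sum mulr_suml; apply: eq_bigr => r _.
have Hr := ltn_ord r.
have c1 : ('C(Lam, i))%:R != 0 :> rat by rewrite pnatr_eq0 -lt0n bin_gt0.
have c2 : ('C(Lam, r.+1))%:R != 0 :> rat by rewrite pnatr_eq0 -lt0n bin_gt0.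
have hb := binA Lam r.+1 i.
have hb' : ('C(Lam - r.+1, i))%:R * ('C(Lam, r.+1))%:R = ('C(Lam, i))%:R * ('C(Lam - i, r.+1))%:R :> rat.
  by rewrite -!natrM hb.
rewrite natrM; apply/eqP; rewrite eqr_div //; apply/eqP.
rewrite -mulrA hb'; ring.
Qed.

Lemma fprof_ge0 Lam (L : 'I_Lam -> nat) i : 0 <= fprof L i.
Proof. by rewrite /fprof divr_ge0. Qed.

Lemma jensen Lam (L : 'I_Lam -> nat) (t : nat) (w : 'I_Lam.+1 -> rat) :
  (t <= Lam)%N -> conv_comb w t%:R ->
  fprof L t <= \sum_(i < Lam.+1) w i * fprof L i.
Proof.
move=> Ht [w0 [w1 wt]].
pose c : rat := \sum_(r < Lam) (L r)%:R * 'C(Lam - t, r)%:R / 'C(Lam, r.+1)%:R.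
have key : forall i : 'I_Lam.+1, fprof L t + (t%:R - i%:R) * c <= fprof L i.
  move=> i; have Hi : (i <= Lam)%N by rewrite -ltnS.
  rewrite !fprofE // /c mulr_sumr -big_split /=; apply: ler_sum => r _.
  have cp : 0 <= (L r)%:R / ('C(Lam, r.+1))%:R :> rat by rewrite divr_ge0.
  have H := bin_conv_rat (Lam - i) (Lam - t) r.
  rewrite !natrB // in H.
  have E : (L r)%:R * 'C(Lam - t, r.+1)%:R / 'C(Lam, r.+1)%:R +
    (t%:R - i%:R) * ((L r)%:R * 'C(Lam - t, r)%:R / 'C(Lam, r.+1)%:R)
    = (L r)%:R / ('C(Lam, r.+1))%:R * ('C(Lam - t, r.+1)%:R + (Lam%:R - i%:R - (Lam%:R - t%:R)) * 'C(Lam - t, r)%:R) :> rat.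
    ring.
  rewrite E [X in _ <= X]mulrAC; apply: ler_wpM2l => //.
apply: le_trans (_ : \sum_(i < Lam.+1) w i * (fprof L t + (t%:R - i%:R) * c) <= _); last first.
  by apply: ler_sum => i _; apply: ler_wpM2l.
have E : forall i : 'I_Lam.+1, w i * (fprof L t + (t%:R - i%:R) * c)
   = fprof L t * w i + (c * t%:R) * w i - c * (w i * i%:R).
  by move=> i; ring.
under eq_bigr => i _ do rewrite E.
rewrite sumrB big_split /= -!mulr_sumr w1 wt !mulr1 addrK lexx. done.
Qed.

End RatPart.
Section PermPart.
Local Open Scope nat_scope.
Lemma card_sumb (T : finType) (P : pred T) : #|[set x | P x]| = \sum_x (P x : nat).
Proof. by rewrite -sum1_card big_mkcond; apply: eq_bigr => x _; rewrite inE; case: (P x). Qed.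

Lemma sum_lt n m : \sum_(p < n) (p < m) = minn m n.
Proof.
elim: n => [|n IH]; first by rewrite big_ord0; lia.
rewrite big_ord_recr /= IH; case: (ltnP n m) => H; lia.
Qed.

Lemma sum_ge n m : \sum_(p < n) (m <= p) = n - m.
Proof.
have : \sum_(p < n) ((m <= p) + (p < m)) = n.
  rewrite -[RHS]card_ord -sum1_card; apply: eq_bigr => p _; case: (leqP m p); lia.
rewrite big_split /= sum_lt; lia.
Qed.

Definition Pm Lam (S : {set 'I_Lam}) (m : nat) (s : 'S_Lam) : bool :=
  [forall i : 'I_Lam, (i < m) ==> (s i \notin S)].

Definition cpre Lam (S : {set 'I_Lam}) (m : nat) : nat := \sum_(s : 'S_Lam) Pm S m s.

Lemma swap_pos Lam (S : {set 'I_Lam}) m (m0 p : 'I_Lam) : m0 = m :> nat -> m <= p ->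
  \sum_(s : 'S_Lam) (Pm S m s && (s p \notin S)) = \sum_(s : 'S_Lam) (Pm S m s && (s m0 \notin S)).
Proof.
move=> Hm0 Hp.
rewrite (reindex_inj (mulgI (tperm m0 p))) /=.
apply: eq_bigr => s _; congr (nat_of_bool (_ && _)); last first.
  by rewrite permM tpermR.
apply/forallP/forallP => H i; apply/implyP => Hi; have := implyP (H i) Hi;
  rewrite permM tpermD //; apply/eqP => E; move: Hi; rewrite -E; lia.
Qed.

Lemma cpre_rec Lam (S : {set 'I_Lam}) m : m < Lam ->
  (Lam - m) * cpre S m.+1 = (Lam - m - #|S|) * cpre S m.
Proof.
move=> Hm; pose m0 := Ordinal Hm.
have E1 : forall s : 'S_Lam, Pm S m.+1 s = Pm S m s && (s m0 \notin S).
  move=> s; apply/forallP/andP.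
    move=> H; split.
      by apply/forallP => i; apply/implyP => Hi; apply: (implyP (H i)); lia.
    by apply: (implyP (H m0)) => /=.
  case=> /forallP H1 H2 i; apply/implyP => Hi.
  case: (ltnP i m) => H3; first exact: (implyP (H1 i)).
  by have -> : i = m0 by apply: val_inj => /=; lia.
have E2 : cpre S m.+1 = \sum_(s : 'S_Lam) (Pm S m s && (s m0 \notin S)).
  by apply: eq_bigr => s _; rewrite E1.
have E3 : (Lam - m) * cpre S m.+1 =
    \sum_(p < Lam) (m <= p) * \sum_(s : 'S_Lam) (Pm S m s && (s p \notin S)).
  rewrite -sum_ge big_distrl /=; apply: eq_bigr => p _.
  by case: (leqP m p) => H //; rewrite (@swap_pos _ S m m0 p) // E2.
rewrite E3 /cpre big_distrr /=.
under eq_bigr => p _ do rewrite big_distrr /=.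
rewrite exchange_big /=; apply: eq_bigr => s _.
case Hs: (Pm S m s); last by rewrite muln0; apply: big1 => p _; rewrite andFb muln0.
rewrite muln1.
have F1 : \sum_(p < Lam) (s p \notin S) = Lam - #|S|.
  have H := card_preimset (~: S) (@perm_inj _ s).
  have H2 : #|~: S| = Lam - #|S| by rewrite cardsCs setCK card_ord.
  rewrite -H2 -H -sum1_card [RHS]big_mkcond; apply: eq_bigr => p _.
  by rewrite !inE; case: (s p \in S).
have F2 : \sum_(p < Lam) (s p \notin S) = \sum_(p < Lam) (p < m) + \sum_(p < Lam) ((m <= p) * (s p \notin S)).
  rewrite -big_split /=; apply: eq_bigr => p _.
  case: (ltnP p m) => H /=.
    by rewrite (implyP (forallP Hs p)) //; lia.
  by rewrite mul1n.
rewrite sum_lt in F2.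
have E4 : minn m Lam = m by lia.
rewrite E4 in F2.
rewrite (eq_bigr (fun p : 'I_Lam => (m <= p) * (s p \notin S))); last by move=> p _; rewrite andTb.
apply: (@addnI m); rewrite -F2 F1.
have : m + #|S| <= Lam.
  have := leq_addr (\sum_(p < Lam) (m <= p) * (s p \notin S)) m.
  rewrite -F2 F1 => H. have := subset_leq_card (subsetT S). rewrite cardsT card_ord => HS.
  by rewrite addnC -leq_subRL.
move=> HS; rewrite subnAC subnKC //.
have HS2 : #|S| <= Lam by apply: leq_trans HS; apply: leq_addl.
by rewrite -(leq_add2r #|S|) subnK.
Qed.

Lemma cpreE Lam (S : {set 'I_Lam}) m : m <= Lam ->
  cpre S m * 'C(Lam, #|S|) = Lam`! * 'C(Lam - m, #|S|).
Proof.
elim: m => [|m IH] Hm.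
  rewrite subn0; congr (_ * _); rewrite /cpre -card_Sn -sum1_card; apply: eq_bigr => s _.
  by rewrite /Pm; apply/eqP; rewrite eqb1; apply/forallP => i.
have Hm' : m < Lam by [].
have R := cpre_rec S Hm'.
have Hpos : 0 < Lam - m by lia.
apply/eqP; rewrite -(eqn_pmul2l Hpos); apply/eqP.
rewrite mulnA R -mulnA IH; last by lia.
have := mul_bin_down (Lam - m) #|S|.
have -> : (Lam - m).-1 = Lam - m.+1 by lia.
move=> B.
by rewrite [RHS]mulnCA B mulnCA.
Qed.

End PermPart.
Section ChainPart.
Local Open Scope nat_scope.
Definition WX (N B : nat) (X : {set 'I_N * 'I_B}) : library N B :=
  [ffun n => [ffun b => (n, b) \in X]].

Lemma chain (K Lam N B : nat) (chi : scheme K Lam N B) (a : assoc K Lam) (d : demand K N)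
  (pos : 'I_K -> nat) (P : {set 'I_N * 'I_B}) :
  (forall k : 'I_K, exists dec : seq bool -> library N B -> {ffun 'I_B -> bool},
          forall W, dec (encode chi a d W) (cache_view (placement chi (a k)) W) = W (d k)) ->
  (forall W, size (encode chi a d W) = msglen chi a d) ->
  (forall nb, nb \in P -> exists k, d k = nb.1 /\
      forall k', nb \in placement chi (a k') -> pos k < pos k') ->
  #|P| <= msglen chi a d.
Proof.
move=> Hdec Hsize HP.
set m := msglen chi a d.
pose f (X : {set 'I_N * 'I_B}) : {ffun 'I_m -> bool} :=
  [ffun i : 'I_m => nth false (encode chi a d (WX X)) i].
have inj : {in powerset P &, injective f}.
  move=> X Y; rewrite !inE => HX HY Hf.
  have Henc : encode chi a d (WX X) = encode chi a d (WX Y).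
    apply: (@eq_from_nth _ false); first by rewrite !Hsize.
    move=> i; rewrite Hsize => Hi.
    by have := congr1 (fun g : {ffun 'I_m -> bool} => g (Ordinal Hi)) Hf; rewrite !ffunE.
  have IH : forall j (k : 'I_K), pos k < j -> WX X (d k) = WX Y (d k).
    elim=> [//|j IH] k Hk.
    have Hview : cache_view (placement chi (a k)) (WX X) = cache_view (placement chi (a k)) (WX Y).
      apply/ffunP => n; apply/ffunP => b; rewrite !ffunE.
      case Hz: ((n, b) \in placement chi (a k)) => //=.
      case: (boolP ((n, b) \in P)) => HnP.
        have [k2 [Hk2 Hlt]] := HP _ HnP.
        have Hl := Hlt k Hz.
        have := congr1 (fun g : {ffun 'I_B -> bool} => g b) (IH k2 (leq_trans Hl Hk)).
        by rewrite /= Hk2 !ffunE.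
      apply/idP/idP => H.
        by move: (subsetP HX _ H); rewrite (negbTE HnP).
      by move: (subsetP HY _ H); rewrite (negbTE HnP).
    have [dec Hd] := Hdec k.
    by rewrite -Hd -[RHS]Hd Henc Hview.
  apply/setP => [[n b]].
  case: (boolP ((n, b) \in P)) => HnP.
    have [k [Hk _]] := HP _ HnP.
    have := congr1 (fun g : {ffun 'I_B -> bool} => g b) (IH (pos k).+1 k (ltnSn _)).
    by rewrite /= Hk !ffunE.
  apply/idP/idP => H.
    by move: (subsetP HX _ H); rewrite (negbTE HnP).
  by move: (subsetP HY _ H); rewrite (negbTE HnP).
have := card_in_imset inj; rewrite card_powerset => E.
have := max_card (mem (f @: powerset P)).
rewrite card_ffun card_bool card_ord.
have -> : #|mem (f @: powerset P)| = #|f @: powerset P| by [].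
by rewrite E leq_exp2l.
Qed.

End ChainPart.
Section Ach.
Local Open Scope nat_scope.
Variables K Lam N t : nat.

Definition TS : {set {set 'I_Lam}} := [set T : {set 'I_Lam} | #|T| == t].
Definition Bt : nat := #|TS|.
Definition bset (b : 'I_Bt) : {set 'I_Lam} := @enum_val _ (pred_of_set TS) b.

Lemma bsetP b : #|bset b| = t.
Proof. by have := enum_valP b; rewrite inE => /eqP. Qed.

Lemma bset_inj : injective bset.
Proof. exact: enum_val_inj. Qed.

Definition cnt (a : assoc K Lam) (l : 'I_Lam) : nat := #|[set k | a k == l]|.
Definition srt (a : assoc K Lam) : seq 'I_Lam := sort (relpre (cnt a) geq) (enum 'I_Lam).
Definition rk (a : assoc K Lam) (l : 'I_Lam) : nat := index l (srt a).
Definition idx (a : assoc K Lam) (k : 'I_K) : nat := #|[set k' | (a k' == a k) && (k' < k)]|.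

Definition wbit (W : library N Bt) (n : 'I_N) (T : {set 'I_Lam}) : bool :=
  [exists b : 'I_Bt, (bset b == T) && W n b].

Definition validx (a : assoc K Lam) (x : 'I_Lam * 'I_K * {set 'I_Lam}) : bool :=
  [&& (x.1.2 < cnt a x.1.1), (#|x.2| == t) & [forall τ in x.2, rk a x.1.1 < rk a τ]].

Definition tx (a : assoc K Lam) := [seq x <- enum {: 'I_Lam * 'I_K * {set 'I_Lam}} | validx a x].

Definition content (a : assoc K Lam) (d : demand K N) (W : library N Bt)
  (x : 'I_Lam * 'I_K * {set 'I_Lam}) : bool :=
  \big[addb/false]_(k' | (a k' \in x.1.1 |: x.2) && (idx a k' == x.1.2))
     wbit W (d k') ((x.1.1 |: x.2) :\ a k').

Definition enc (a : assoc K Lam) (d : demand K N) (W : library N Bt) : seq bool :=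
  map (content a d W) (tx a).

Definition plc (l : 'I_Lam) : {set 'I_N * 'I_Bt} := [set nb | l \in bset nb.2].

Definition chiA : scheme K Lam N Bt := Scheme plc (fun a d => size (tx a)) enc.

Lemma idx_lt_cnt (a : assoc K Lam) k : idx a k < cnt a (a k).
Proof.
apply: proper_card; apply/properP; split.
  by apply/subsetP => k'; rewrite !inE => /andP[].
by exists k; rewrite !inE ?eqxx ?ltnn.
Qed.

Lemma cnt_le (a : assoc K Lam) l : cnt a l <= K.
Proof. by rewrite /cnt; have := max_card (mem [set k | a k == l]); rewrite card_ord. Qed.

Lemma idx_lt (a : assoc K Lam) k : idx a k < K.
Proof. exact: leq_trans (idx_lt_cnt a k) (cnt_le a (a k)). Qed.

Lemma idx_inj (a : assoc K Lam) k k' : a k' = a k -> idx a k' = idx a k -> k' = k.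
Proof.
move=> Ha.
wlog H : k k' Ha / k' < k.
  move=> Hw Hi; case: (ltngtP k' k) => H.
  - exact: Hw.
  - by apply/esym; apply: Hw => //.
  - exact: val_inj.
move=> Hi; exfalso.
have : idx a k' < idx a k.
  apply: proper_card; apply/properP; split.
    apply/subsetP => k2; rewrite !inE => /andP[/eqP -> Hk2].
    by rewrite Ha eqxx /=; apply: ltn_trans H.
  by exists k'; rewrite !inE ?Ha ?eqxx ?ltnn // H.
by rewrite Hi ltnn.
Qed.

Lemma srt_uniq (a : assoc K Lam) : uniq (srt a).
Proof. by rewrite /srt sort_uniq enum_uniq. Qed.

Lemma srt_size (a : assoc K Lam) : size (srt a) = Lam.
Proof. by rewrite /srt size_sort size_enum_ord. Qed.

Lemma mem_srt (a : assoc K Lam) l : l \in srt a.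
Proof. by rewrite /srt mem_sort mem_enum. Qed.

Lemma rk_lt (a : assoc K Lam) l : rk a l < Lam.
Proof. by have := srt_size a; rewrite /rk => {2}<-; rewrite index_mem mem_srt. Qed.

Lemma rk_inj (a : assoc K Lam) : injective (rk a).
Proof. by move=> x y H; apply: (index_inj x (mem_srt a x) (mem_srt a y)). Qed.

Lemma rk_mono (a : assoc K Lam) l m : rk a m <= rk a l -> cnt a l <= cnt a m.
Proof.
move=> H.
have S : sorted (relpre (cnt a) geq) (srt a).
  apply: sort_sorted => x y /=; exact: leq_total.
have tr : transitive (relpre (cnt a) geq) by move=> x y z /= H1 H2; apply: leq_trans H2 H1.
have rf : reflexive (relpre (cnt a) geq) by move=> x /=.
have Hm : rk a m \in [pred n | n < size (srt a)] by rewrite inE srt_size rk_lt.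
have Hl : rk a l \in [pred n | n < size (srt a)] by rewrite inE srt_size rk_lt.
have := @sorted_leq_nth _ _ tr rf l _ S (rk a m) (rk a l) Hm Hl H.
by rewrite /= /rk !nth_index ?mem_srt.
Qed.


Lemma wbitE W n b : wbit W n (bset b) = W n b.
Proof.
apply/existsP/idP => [[b' /andP[/eqP /bset_inj -> //]]|H].
by exists b; rewrite eqxx.
Qed.

Lemma wbit_view l W n (T : {set 'I_Lam}) : l \in T -> wbit (cache_view (plc l) W) n T = wbit W n T.
Proof.
move=> H; apply: eq_existsb => b'; rewrite !ffunE inE.
by case: eqP => //= ->; rewrite H.
Qed.

Definition mu0 (a : assoc K Lam) (l : 'I_Lam) (Q : {set 'I_Lam}) : 'I_Lam :=
  [arg min_(mu < l in Q) rk a mu].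

Definition decA (a : assoc K Lam) (d : demand K N) (k : 'I_K)
  (X : seq bool) (C : library N Bt) : {ffun 'I_Bt -> bool} :=
  [ffun b => if a k \in bset b then C (d k) b else
   let Q := a k |: bset b in let mu := mu0 a (a k) Q in
   nth false X (index (mu, Ordinal (idx_lt a k), Q :\ mu) (tx a)) (+)
   \big[addb/false]_(k' | (a k' \in Q) && (idx a k' == idx a k) && (k' != k))
      wbit C (d k') (Q :\ a k')].

Lemma decA_ok (a : assoc K Lam) d k W :
  decA a d k (enc a d W) (cache_view (plc (a k)) W) = W (d k).
Proof.
apply/ffunP => b; rewrite ffunE /=.
case: ifP => Hin.
  by rewrite !ffunE inE Hin.
set T := bset b; set Q := a k |: T; set mu := mu0 a (a k) Q.
have HQ : a k \in Q by rewrite setU11.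
have [Hmu Hmin] : mu \in Q /\ forall y, y \in Q -> rk a mu <= rk a y.
  by rewrite /mu /mu0; case: arg_minnP.
set x := (mu, Ordinal (idx_lt a k), Q :\ mu).
have Hx : x \in tx a.
  rewrite /tx mem_filter mem_enum andbT /validx /=; apply/and3P; split.
  - exact: leq_trans (idx_lt_cnt a k) (rk_mono (Hmin _ HQ)).
  - have := cardsD1 mu Q; rewrite Hmu /Q cardsU1 Hin /T bsetP add1n => /eqP.
    by rewrite eqSS eq_sym.
  - apply/forallP => y; apply/implyP; rewrite inE => /andP[Hy1 Hy2].
    rewrite ltn_neqAle Hmin // andbT; apply/eqP => E.
    by move: Hy1; rewrite (rk_inj E) set11.
rewrite /enc (nth_map x) ?index_mem // nth_index // /content /x /=.
rewrite setD1K //.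
rewrite (bigD1 k) /=; last by rewrite HQ eqxx.
rewrite /Q setU1K ?Hin // wbitE -/Q.
set R1 := \big[addb/false]_(i | _) _.
set R2 := \big[addb/false]_(i | _) _.
have -> : R1 = R2.
  apply: eq_bigr => k' /andP[/andP[Hk'Q Hid] Hne].
  rewrite wbit_view //.
  rewrite in_setD1 HQ andbT; apply/eqP => E.
  by move: Hne; rewrite (idx_inj (esym E) (eqP Hid)) eqxx.
by rewrite -addbA addbb addbF.
Qed.


Lemma Bt_eq : Bt = 'C(Lam, t).
Proof. by rewrite /Bt /TS card_draws card_ord. Qed.

Lemma bin_help n m : ('C(n, m) - 'C(n.-1, m)) * n = m * 'C(n, m).
Proof.
case: n => [|n]; first by case: m => [|m]; rewrite ?subnn ?muln0.
case: m => [|m]; first by rewrite !bin0 subnn.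
by rewrite binS addKn mulnC mul_bin_diag.
Qed.

Lemma card_plc l : #|plc l| * Lam = N * t * Bt.
Proof.
have E1 : plc l = setX [set: 'I_N] [set b : 'I_Bt | l \in bset b].
  by apply/setP => -[n b]; rewrite !inE.
have E2 : #|[set b : 'I_Bt | l \in bset b]| = \sum_(T in TS) (l \in T).
  rewrite card_sumb (big_enum_val (fun T : {set 'I_Lam} => nat_of_bool (l \in T))) /=.
  by [].
have E3 : \sum_(T in TS) (l \in T) + \sum_(T in TS) (l \notin T) = Bt.
  rewrite -big_split /= /Bt -sum1_card; apply: eq_bigr => T _; by case: (l \in T).
have E4 : \sum_(T in TS) (l \notin T) = 'C(Lam.-1, t).
  rewrite -[Lam in 'C(Lam.-1, t)]card_ord -(cardsC1 l) -cards_draws card_sumb [RHS]big_mkcond [LHS]big_mkcond /=.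
  apply: eq_bigr => T _; rewrite !inE.
  have -> : (T \subset [set~ l]) = (l \notin T).
    apply/subsetP/idP => [H|H x Hx]; first by apply/negP => /H; rewrite !inE eqxx.
    by rewrite !inE; apply/eqP => E; move: H; rewrite -E Hx.
  by case: (l \notin T); case: (#|T| == t).
rewrite E1 cardsX cardsT card_ord E2.
have : \sum_(T in TS) (l \in T) = Bt - 'C(Lam.-1, t) by rewrite -E3 E4 addnK.
move=> ->; rewrite Bt_eq -mulnA bin_help; ring.
Qed.

Lemma sum_rk (a : assoc K Lam) (F : nat -> nat) :
  \sum_(mu : 'I_Lam) F (rk a mu) = \sum_(i < Lam) F i.
Proof.
case: (posnP Lam) => [H0|Hpos].
  by rewrite !big1 // => i; have := ltn_ord i; lia.
have Hp : perm_eq (srt a) (enum 'I_Lam) by rewrite /srt perm_sort.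
rewrite -big_enum /= -(perm_big _ Hp) [LHS](big_nth (Ordinal Hpos)) srt_size big_mkord.
apply: eq_bigr => i _; rewrite /rk index_uniq ?srt_uniq ?srt_size //.
Qed.

Lemma size_tx (a : assoc K Lam) :
  size (tx a) = \sum_(mu : 'I_Lam) cnt a mu * 'C(Lam - (rk a mu).+1, t).
Proof.
rewrite /tx size_filter -sum1_count big_enum_cond /=.
rewrite big_mkcond /= -(pair_big (fun _ => true) (fun _ => true)
  (fun p T => if validx a (p, T) then 1 else 0)) /=.
rewrite -(pair_big (fun _ => true) (fun _ => true)
  (fun mu u => \sum_(T : {set 'I_Lam}) if validx a (mu, u, T) then 1 else 0)) /=.
apply: eq_bigr => mu _.
pose U := [set tau | rk a mu < rk a tau].
have HU : #|U| = Lam - (rk a mu).+1.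
  rewrite card_sumb (sum_rk a (fun r => nat_of_bool (rk a mu < r))) sum_ge //.
rewrite -HU -cards_draws card_sumb.
have -> : \sum_(u < K) \sum_(T : {set 'I_Lam}) (if validx a (mu, u, T) then 1 else 0) =
   \sum_(u < K) (u < cnt a mu) * \sum_(T : {set 'I_Lam}) ((T \subset U) && (#|T| == t)).
  apply: eq_bigr => u _; rewrite big_distrr /=; apply: eq_bigr => T _.
  rewrite /validx /=.
  have -> : [forall tau in T, rk a mu < rk a tau] = (T \subset U).
    apply/forallP/subsetP => [H x Hx|H x]; first by rewrite inE; exact: (implyP (H x)).
    by apply/implyP => /H; rewrite inE.
  by case: (u < cnt a mu); case: (#|T| == t); case: (T \subset U).
rewrite -big_distrl /= sum_lt; congr (_ * _).
by have := cnt_le a mu; lia.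
Qed.

Lemma size_tx_prof (L : 'I_Lam -> nat) (a : assoc K Lam) : has_profile L a ->
  size (tx a) = \sum_(r < Lam) L r * 'C(Lam - r.+1, t).
Proof.
move=> /eqP H; rewrite size_tx.
case: (posnP Lam) => [H0|Hpos].
  by rewrite !big1 // => i; have := ltn_ord i; lia.
rewrite sort_map -/(srt a) in H.
have Hp : perm_eq (srt a) (enum 'I_Lam) by rewrite /srt perm_sort.
rewrite -big_enum /= -(perm_big _ Hp) [LHS](big_nth (Ordinal Hpos)) srt_size big_mkord.
apply: eq_bigr => i _; rewrite /rk index_uniq ?srt_uniq ?srt_size //.
congr (_ * _).
have E := congr1 (fun s => nth 0 s i) H.
rewrite -[cnt a _](nth_map (Ordinal Hpos) 0) ?srt_size // /= E (nth_map (Ordinal Hpos)) ?size_enum_ord //.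
by rewrite nth_ord_enum.
Qed.

End Ach.

Section ConvNat.
Local Open Scope nat_scope.

Lemma exists_a0 K Lam (L : 'I_Lam -> nat) : 0 < Lam -> \sum_l L l = K ->
  exists a0 : assoc K Lam, forall j, cnt a0 j = L j.
Proof.
move=> HL HK; pose l0 := Ordinal HL.
pose s := flatten [seq nseq (L j) j | j <- enum 'I_Lam].
have Hs : size s = K.
  rewrite size_flatten /shape -map_comp sumnE big_map -HK big_enum /=.
  by apply: eq_bigr => j _; rewrite /= size_nseq.
exists [ffun k : 'I_K => nth l0 s k] => j.
have E1 : count (pred1 j) s = L j.
  rewrite count_flatten -map_comp sumnE big_map big_enum /=.
  rewrite (bigD1 j) //= count_nseq /= eqxx mul1n big1 ?addn0 // => i Hi.
  by rewrite /= count_nseq /= (negbTE Hi).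
rewrite -E1 /cnt card_sumb -sum1_count (big_nth l0) Hs big_mkord [RHS]big_mkcond /=.
by apply: eq_bigr => k _; rewrite ffunE; case: (_ == _).
Qed.

Lemma has_profile_perm K Lam (L : 'I_Lam -> nat) (a0 : assoc K Lam) (s : 'S_Lam) :
  (forall i j : 'I_Lam, i <= j -> L j <= L i) -> (forall j, cnt a0 j = L j) ->
  has_profile L [ffun k => s (a0 k)].
Proof.
move=> HL Ha0; rewrite /has_profile.
have Hc : forall l, #|[set k | [ffun k => s (a0 k)] k == l]| = L ((s^-1)%g l).
  move=> l; rewrite -Ha0 /cnt; apply: eq_card => k; rewrite !inE ffunE.
  by apply/eqP/eqP => [<-|->]; rewrite ?permK ?permKV.
rewrite (eq_map Hc) map_comp.
have Hp : perm_eq (map (s^-1)%g (enum 'I_Lam)) (enum 'I_Lam).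
  apply: uniq_perm; first by rewrite (map_inj_uniq (@perm_inj _ _)) enum_uniq.
    exact: enum_uniq.
  move=> x; rewrite mem_enum; apply/mapP; exists (s x); first by rewrite mem_enum.
  by rewrite permK.
have -> : sort geq (map L (map (s^-1)%g (enum 'I_Lam))) = sort geq (map L (enum 'I_Lam)).
  apply/perm_sortP; first by move=> x y; exact: leq_total.
  - by move=> x y z H1 H2; apply: leq_trans H2 H1.
  - by move=> x y /andP[H1 H2]; apply/eqP; rewrite eqn_leq; apply/andP; split.
  exact: perm_map.
rewrite sorted_sort //; first by move=> x y z H1 H2; apply: leq_trans H2 H1.
rewrite sorted_map.
have : sorted (relpre val leq) (enum 'I_Lam).
  by rewrite -sorted_map val_enum_ord iota_sorted.
apply: sub_sorted => x y /=; exact: HL.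
Qed.

Definition ds K N (HN : 0 < N) (s : 'I_N) : demand K N :=
  [ffun k : 'I_K => Ordinal (ltn_pmod (k + s) HN)].

Lemma ds_key K N (HN : 0 < N) (HKN : K <= N) (n : 'I_N) (c : 'I_K -> bool) :
  \sum_(s : 'I_N) [exists k, (ds K HN s k == n) && c k] = \sum_k c k.
Proof.
have injk : forall s k1 k2, ds K HN s k1 = ds K HN s k2 -> k1 = k2.
  move=> s k1 k2; rewrite !ffunE => /(congr1 val) /= /eqP.
  rewrite eqn_modDr !modn_small => [/eqP H||]; first exact: val_inj.
  - exact: leq_trans (ltn_ord k2) HKN.
  - exact: leq_trans (ltn_ord k1) HKN.
have E1 : forall s, ([exists k, (ds K HN s k == n) && c k] : nat) = \sum_k ((ds K HN s k == n) && c k).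
  move=> s; case: existsP => [[k0 /andP[H1 H2]]|H].
    rewrite (bigD1 k0) ?H1 ?H2 //= big1 // => k Hk.
    case E: (ds K HN s k == n) => //=.
    by move: Hk; rewrite (injk s k k0) ?eqxx // (eqP E) (eqP H1).
  by rewrite big1 // => k _; case E: (_ && _) => //; exfalso; apply: H; exists k.
rewrite (eq_bigr _ (fun s _ => E1 s)).
rewrite exchange_big /=; apply: eq_bigr => k _.
have -> : \sum_(s : 'I_N) ((ds K HN s k == n) && c k) = c k * \sum_(s : 'I_N) (ds K HN s k == n).
  by rewrite big_distrr /=; apply: eq_bigr => s _; case: (c k); rewrite ?andbT ?andbF ?mul1n ?mul0n.
suff -> : \sum_(s : 'I_N) (ds K HN s k == n) = 1 by rewrite muln1.
have injs : injective (fun s : 'I_N => ds K HN s k).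
  move=> s1 s2; rewrite !ffunE => /(congr1 val) /= /eqP.
  by rewrite eqn_modDl !modn_small // => /eqP H; apply: val_inj.
have := card_preimset [set n] injs; rewrite cards1 => <-.
by rewrite card_sumb; apply: eq_bigr => s _; rewrite !inE.
Qed.

Lemma sum_part K Lam (a0 : assoc K Lam) (F : 'I_Lam -> nat) :
  \sum_k F (a0 k) = \sum_j cnt a0 j * F j.
Proof.
rewrite (partition_big a0 xpredT) //=; apply: eq_bigr => j _.
rewrite (eq_bigr (fun _ => F j)); last by move=> k /eqP ->.
rewrite (eq_bigr (fun _ => 1 * F j)); last by move=> *; rewrite mul1n.
by rewrite -big_distrl /= sum1dep_card.

Qed.

End ConvNat.

Section ConvRat.
Local Open Scope ring_scope.

Lemma sel_max n (g : 'I_n.+1 -> rat) :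
  \sum_(i < n.+1) (i == ord_max)%:R * g i = g ord_max.
Proof.
rewrite (bigD1 ord_max) //= eqxx mul1r big1 ?addr0 // => i /negbTE ->.
by rewrite mul0r.
Qed.

Lemma mix (Lam t : nat) (f : nat -> rat) (v x : rat) (w : 'I_Lam.+1 -> rat) :
  (t <= Lam)%N -> f Lam = 0 -> (forall i, 0 <= f i) ->
  (forall w, conv_comb w t%:R -> v <= \sum_(i < Lam.+1) w i * f i) ->
  conv_comb w x -> x <= t%:R -> v <= \sum_(i < Lam.+1) w i * f i.
Proof.
move=> Ht fL f0 Hv Hw Hx.
case: (eqVneq x t%:R) => [Ex|Nx]; first by apply: Hv; rewrite -Ex.
have Hxt : x < t%:R by rewrite lt_neqAle Nx Hx.
have HtL : t%:R <= Lam%:R :> rat by rewrite ler_nat.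
have Hd : 0 < Lam%:R - x by lra.
pose al := (t%:R - x) / (Lam%:R - x).
have al0 : 0 <= al by rewrite divr_ge0 //; lra.
have al1 : al <= 1 by rewrite ler_pdivrMr // mul1r; lra.
have Eal : al * (Lam%:R - x) = t%:R - x by rewrite /al divfK //; lra.
pose w' := fun i : 'I_Lam.+1 => (1 - al) * w i + (i == ord_max)%:R * al.
case: Hw => [w0 [w1 wx]].
have Ew : forall (g : 'I_Lam.+1 -> rat) i, w' i * g i = (1 - al) * (w i * g i) + (i == ord_max)%:R * (al * g i).
  by move=> g i; rewrite /w'; ring.
have S0 : 0 <= \sum_(i < Lam.+1) w i * f i by apply: sumr_ge0 => i _; apply: mulr_ge0.
have Hc : conv_comb w' t%:R.
  split; [|split].
  - move=> i; apply: addr_ge0; apply: mulr_ge0 => //; first lra.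
  - have E := sel_max (fun _ => al); simpl in E.
    rewrite /w' big_split /= -mulr_sumr w1 E; ring.
  - rewrite (eq_bigr _ (fun i _ => Ew (fun i : 'I_Lam.+1 => (i : nat)%:R) i)).
    have E := sel_max (fun i : 'I_Lam.+1 => al * (i : nat)%:R); simpl in E.
    rewrite big_split /= -mulr_sumr E wx.
    transitivity (x + al * (Lam%:R - x)); first by ring.
    by rewrite Eal; ring.
have := Hv _ Hc.
rewrite (eq_bigr _ (fun i _ => Ew (fun i : 'I_Lam.+1 => f i) i)).
have E := sel_max (fun i : 'I_Lam.+1 => al * f i); simpl in E.
rewrite big_split /= -mulr_sumr E fL mulr0 addr0.
move=> H; apply: le_trans H _.
have : 0 <= al * \sum_(i < Lam.+1) w i * f i by apply: mulr_ge0.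
lra.
Qed.

End ConvRat.

Local Open Scope ring_scope.

Lemma fprof_Lam Lam (L : 'I_Lam -> nat) : fprof L Lam = 0.
Proof. by rewrite /fprof big1 ?mul0r // => r; rewrite subnn ltn0. Qed.

Theorem converse K Lam N (L : 'I_Lam -> nat) (t : nat) (v : rat) B (chi : scheme K Lam N B) :
  (0 < Lam)%N -> (Lam <= K)%N -> (K <= N)%N ->
  (forall i j : 'I_Lam, (i <= j)%N -> (L j <= L i)%N) ->
  (\sum_(l < Lam) L l)%N = K -> (t <= Lam)%N ->
  (forall w, conv_comb w t%:R -> v <= \sum_(i < Lam.+1) w i * fprof L i) ->
  (0 < B)%N -> valid_scheme ((t%:R / Lam%:R) * N%:R) chi -> v <= worst_time L chi.
Proof.
move=> HL HLK HKN Hmono HK Ht Hv HB [Hmem Hsize Hdec].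
have HN : (0 < N)%N by lia.
have [a0 Ha0] := exists_a0 HL HK.
set Z := placement chi.
pose Sb (nb : 'I_N * 'I_B) := [set l | nb \in Z l].
set mx := (\max_(a : assoc K Lam | has_profile L a) \max_(d : demand K N) msglen chi a d)%N.
pose Pset (s : 'S_Lam) (u : 'I_N) := [set nb : 'I_N * 'I_B |
   [exists k, (ds K HN u k == nb.1) && Pm (Sb nb) (a0 k).+1 s]].
have Hb : forall s u, (#|Pset s u| <= mx)%N.
  move=> s u.
  apply: (@leq_trans (msglen chi [ffun k => s (a0 k)] (ds K HN u))).
    apply: (chain (pos := fun k => a0 k)).
    - by move=> k; apply: Hdec.
    - by move=> W; apply: Hsize.
    - move=> nb; rewrite inE => /existsP [k /andP[/eqP Hk HP]].
      exists k; split => // k'; rewrite ffunE => Hz.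
      rewrite ltnNge; apply/negP => Hle.
      have := implyP (forallP HP (a0 k')); rewrite ltnS => /(_ Hle).
      by rewrite inE Hz.
  apply: (@leq_trans (\max_(d : demand K N) msglen chi [ffun k => s (a0 k)] d)).
    exact: (leq_bigmax (F := fun d => msglen chi [ffun k => s (a0 k)] d)).
  apply: (leq_bigmax_cond (F := fun a => \max_(d : demand K N) msglen chi a d)).
  exact: has_profile_perm.
have Hsum : (\sum_(s : 'S_Lam) \sum_(u : 'I_N) #|Pset s u| =
             \sum_(nb : 'I_N * 'I_B) \sum_(j < Lam) L j * cpre (Sb nb) j.+1)%N.
  transitivity (\sum_(s : 'S_Lam) \sum_(nb : 'I_N * 'I_B) \sum_(j < Lam) L j * Pm (Sb nb) j.+1 s)%N.
    apply: eq_bigr => s _.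
    rewrite (eq_bigr _ (fun u _ => card_sumb _)) exchange_big /=; apply: eq_bigr => nb _.
    rewrite (ds_key HN HKN nb.1 (fun k => Pm (Sb nb) (a0 k).+1 s)).
    rewrite (sum_part a0 (fun j => nat_of_bool (Pm (Sb nb) j.+1 s))).
    by apply: eq_bigr => j _; rewrite Ha0.
  rewrite exchange_big /=; apply: eq_bigr => nb _.
  rewrite exchange_big /=; apply: eq_bigr => j _.
  by rewrite /cpre big_distrr.
have Hbound : (\sum_(nb : 'I_N * 'I_B) \sum_(j < Lam) L j * cpre (Sb nb) j.+1 <= Lam`! * (N * mx))%N.
  rewrite -Hsum.
  apply: (@leq_trans (\sum_(s : 'S_Lam) \sum_(u : 'I_N) mx)).
    by apply: leq_sum => s _; apply: leq_sum => u _; apply: Hb.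
  by rewrite sum_nat_const card_Sn sum_nat_const card_ord.
have HSb : forall nb, (#|Sb nb| <= Lam)%N.
  by move=> nb; have := max_card (mem (Sb nb)); rewrite card_ord.
have Hnb : forall nb, ((\sum_(j < Lam) L j * cpre (Sb nb) j.+1)%N%:R : rat)
                       = Lam`!%:R * fprof L #|Sb nb|.
  move=> nb; rewrite fprof_nocond.
  have Cpos : ('C(Lam, #|Sb nb|))%:R != 0 :> rat by rewrite pnatr_eq0 -lt0n bin_gt0 HSb.
  apply: (mulIf Cpos); rewrite -mulrA divfK // -!natrM; congr (_%:R).
  rewrite big_distrl big_distrr /=; apply: eq_bigr => j _.
  rewrite -mulnA cpreE //; ring.
have Hf : \sum_(nb : 'I_N * 'I_B) fprof L #|Sb nb| <= (N * mx)%N%:R.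
  have := Hbound; rewrite -(ler_nat rat) natr_sum natrM.
  rewrite (eq_bigr _ (fun nb _ => Hnb nb)) -mulr_sumr => H.
  by rewrite -(ler_pM2l (_ : 0 < Lam`!%:R)) // ltr0n fact_gt0.
pose NB := (N * B)%N.
have NBpos : (0 < NB)%N by rewrite /NB muln_gt0 HN HB.
have NB0 : NB%:R != 0 :> rat by rewrite pnatr_eq0 -lt0n.
pose w (i : 'I_Lam.+1) : rat := (#|[set nb : 'I_N * 'I_B | #|Sb nb| == i]|)%:R / NB%:R.
have Hwg : forall g : nat -> rat,
    \sum_(i < Lam.+1) w i * g i = (\sum_(nb : 'I_N * 'I_B) g #|Sb nb|) / NB%:R.
  move=> g.
  have E : forall nb, g #|Sb nb| = \sum_(i < Lam.+1) (#|Sb nb| == i)%:R * g i.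
    move=> nb; have Hs : (#|Sb nb| < Lam.+1)%N by rewrite ltnS HSb.
    rewrite (bigD1 (Ordinal Hs)) //= eqxx mul1r big1 ?addr0 // => i Hi.
    case E: (#|Sb nb| == i); last by rewrite mul0r.
    exfalso; move: Hi; rewrite (_ : i = Ordinal Hs) ?eqxx //; apply: val_inj; by rewrite /= (eqP E).
  rewrite (eq_bigr _ (fun nb _ => E nb)) exchange_big /= mulr_suml; apply: eq_bigr => i _.
  rewrite /w mulrAC -mulr_suml card_sumb natr_sum.
  by congr (_ / _); apply: eq_bigr => nb _.
have Hcw : conv_comb w ((\sum_(nb : 'I_N * 'I_B) (#|Sb nb|)%:R) / NB%:R).
  split; [|split].
  - by move=> i; rewrite /w divr_ge0.
  - have := Hwg (fun _ => 1); rewrite (eq_bigr w); last by move=> i _; rewrite mulr1.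
    move=> ->; rewrite sumr_const card_prod !card_ord -/NB.
    by rewrite divff.
  - exact: (Hwg (fun i => i%:R)).
have Hx : (\sum_(nb : 'I_N * 'I_B) (#|Sb nb|)%:R) / NB%:R <= t%:R :> rat.
  have E1 : (\sum_(nb : 'I_N * 'I_B) #|Sb nb| = \sum_(l < Lam) #|Z l|)%N.
    rewrite (eq_bigr _ (fun nb _ => card_sumb _)) exchange_big /=; apply: eq_bigr => l _.
    by rewrite -sum1_card [RHS]big_mkcond.
  rewrite ler_pdivrMr ?ltr0n // -natr_sum E1 natr_sum.
  apply: le_trans (ler_sum _ (fun l _ => Hmem l)) _.
  rewrite sumr_const card_ord /NB natrM -[_ *+ Lam]mulr_natr.
  have L0 : Lam%:R != 0 :> rat by rewrite pnatr_eq0 -lt0n.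
  by rewrite le_eqVlt; apply/orP; left; apply/eqP; field.
apply: le_trans (mix (f := fprof L) Ht (fprof_Lam L) (fprof_ge0 L) Hv Hcw Hx) _.
rewrite Hwg /worst_time -/mx.
apply: le_trans (_ : (N * mx)%N%:R / NB%:R <= _).
  by apply: ler_wpM2r => //; rewrite invr_ge0.
rewrite /NB !natrM.
have N0 : N%:R != 0 :> rat by rewrite pnatr_eq0 -lt0n.
have B0 : B%:R != 0 :> rat by rewrite pnatr_eq0 -lt0n.
by rewrite le_eqVlt; apply/orP; left; apply/eqP; field; apply/andP.
Qed.

Theorem theorem1 (K Lam N : nat) (L : 'I_Lam -> nat) (t : nat) (v : rat) :
  (0 < Lam)%N -> (Lam <= K)%N -> (K <= N)%N ->
  (forall i j : 'I_Lam, (i <= j)%N -> (L j <= L i)%N) ->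
  (\sum_(l < Lam) L l)%N = K ->
  (1 <= t <= Lam)%N ->
  is_lower_conv_env Lam (fprof L) ((t%:R / Lam%:R) * Lam%:R) v ->
  let M : rat := (t%:R / Lam%:R) * N%:R in
  (* T*(L) = v : v is attained by some scheme, and no scheme does better *)
  (exists (B : nat) (chi : scheme K Lam N B),
      (0 < B)%N /\ valid_scheme M chi /\ worst_time L chi = v) /\
  (forall (B : nat) (chi : scheme K Lam N B),
      (0 < B)%N -> valid_scheme M chi -> v <= worst_time L chi).
Proof.
move=> HL HLK HKN Hmono HK /andP[Ht1 Ht] Henv M.
have L0 : Lam%:R != 0 :> rat by rewrite pnatr_eq0 -lt0n.
have Ex : (t%:R / Lam%:R) * Lam%:R = t%:R :> rat by rewrite divfK.
rewrite Ex in Henv; case: Henv => [[w [Hw Hwv]] Hall].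
have Hconv : forall (B : nat) (chi : scheme K Lam N B),
      (0 < B)%N -> valid_scheme M chi -> v <= worst_time L chi.
  by move=> B chi HB Hv; apply: (converse HL HLK HKN Hmono HK Ht Hall HB Hv).
split => //.
have Hft : fprof L t <= v by rewrite -Hwv; apply: jensen.
have HB : (0 < Bt Lam t)%N by rewrite Bt_eq bin_gt0.
have Hval : valid_scheme M (chiA K Lam N t).
  split.
  - move=> l /=.
    have := card_plc N t l => E.
    have -> : (#|plc N t l|)%:R = (N * t * Bt Lam t)%N%:R / Lam%:R :> rat.
      by rewrite -E natrM mulfK.
    by rewrite /M !natrM le_eqVlt; apply/orP; left; apply/eqP; field.
  - by move=> a d W; rewrite /= /enc size_map.
  - by move=> a d k; exists (decA a d k) => W; apply: decA_ok.
exists (Bt Lam t), (chiA K Lam N t); split => //; split => //.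
apply/le_anti/andP; split; last exact: Hconv.
apply: le_trans Hft.
rewrite fprof_nocond -Bt_eq /worst_time ler_pM2r ?invr_gt0 ?ltr0n // ler_nat.
apply/bigmax_leqP => a Ha; apply/bigmax_leqP => d _.
by rewrite /= (size_tx_prof t Ha).
Qed.
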